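(* Let $\gamma:(0,\infty)\times(0,\infty)\to[0,\infty)$ be a function such that $v\mapsto\gamma(u,v)$ is non-decreasing for every fixed $u>0$. Then for every $N\ge 2$, all pairwise distinct points $x_1,\dots,x_N\in\mathbb{R}^3\setminus\{0\}$ and every $r>0$, $$\sum_{\substack{j,k=1\\ j\ne k}}^N \frac{\gamma(|x_j-x_k|,\,r|x_j|)}{|x_j|}\;x_j\cdot(x_j-x_k)\ \ge\ 0.$$ *)

(* Defs.v *)
From HB Require Import structures.
From mathcomp Require Import all_boot all_order all_algebra.
From mathcomp Require Import reals.
Set Implicit Arguments. Unset Strict Implicit. Unset Printing Implicit Defensive.
Import Order.TTheory GRing.Theory Num.Theory.
Local Open Scope ring_scope.

Definition dot3 {R : realType} (u v : 'rV[R]_3) : R := \sum_(i < 3) u ord0 i * v ord0 i.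

Definition enorm3 {R : realType} (u : 'rV[R]_3) : R := Num.sqrt (dot3 u u).

(* Main.v *)
Require Import Defs.
From HB Require Import structures.
From mathcomp Require Import all_boot all_order all_algebra.
From mathcomp Require Import reals ring lra.
Import Order.TTheory GRing.Theory Num.Theory.
Local Open Scope ring_scope.

Section S.
Variable R : realType.
Implicit Types p q : 'rV[R]_3.


Lemma dot_ge0 p : 0 <= dot3 p p.
Proof. by apply: sumr_ge0 => i _; rewrite -expr2 sqr_ge0. Qed.

Lemma dot_gt0 p : p != 0 -> 0 < dot3 p p.
Proof.
move=> hp; rewrite lt_def dot_ge0 andbT; apply: contra hp => /eqP h.
have H : forall i, p ord0 i * p ord0 i = 0.
  by move=> i; apply: (psumr_eq0P _ h) => // j _; rewrite -expr2 sqr_ge0.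
apply/eqP/rowP => i; rewrite mxE; apply/eqP; rewrite -[_ == 0]orbb -mulf_eq0; apply/eqP; exact: H.
Qed.

Lemma dot_sub p q : dot3 p (p - q) = dot3 p p - dot3 p q.
Proof. rewrite /dot3 -sumrB; apply: eq_bigr => i _; rewrite !mxE; ring. Qed.

Lemma dotC p q : dot3 p q = dot3 q p.
Proof. by apply: eq_bigr => i _; rewrite mulrC. Qed.

Lemma cs p q : dot3 p q <= enorm3 p * enorm3 q.
Proof.
have h2 : dot3 p q ^+ 2 <= dot3 p p * dot3 q q.
  rewrite /dot3 !big_ord_recr !big_ord0 /= !add0r.
  set p0 := p ord0 _; set p1 := p ord0 _; set p2 := p ord0 _.
  set q0 := q ord0 _; set q1 := q ord0 _; set q2 := q ord0 _.
  rewrite -subr_ge0.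
  have -> : (p0 * p0 + p1 * p1 + p2 * p2) * (q0 * q0 + q1 * q1 + q2 * q2) -
     (p0 * q0 + p1 * q1 + p2 * q2) ^+ 2 = (p0 * q1 - p1 * q0) ^+ 2 + (p0 * q2 - p2 * q0) ^+ 2 + (p1 * q2 - p2 * q1) ^+ 2 by ring.
  by rewrite !addr_ge0 ?sqr_ge0.
have ha := sqrtr_ge0 (dot3 p p); have hb := sqrtr_ge0 (dot3 q q).
have ea := sqr_sqrtr (dot_ge0 p); have eb := sqr_sqrtr (dot_ge0 q).
rewrite /enorm3; move: ha hb ea eb h2.
set a := Num.sqrt _; set b := Num.sqrt _; set c := dot3 p q.
move=> ha hb <- <- h2.
have [//|hc] := lerP c (a * b).
have hab : 0 <= a * b by exact: mulr_ge0.
have : 0 < (c - a * b) * (c + a * b) by apply: mulr_gt0; lra.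
have : a ^+ 2 * b ^+ 2 = (a * b) ^+ 2 by ring.
nra.
Qed.

Lemma pair_ge0 (gamma : R -> R -> R)
  (gamma_ge0 : forall u v, 0 < u -> 0 < v -> 0 <= gamma u v)
  (gamma_mono : forall u v1 v2, 0 < u -> 0 < v1 -> v1 <= v2 -> gamma u v1 <= gamma u v2)
  r (hr : 0 < r) p q : p != 0 -> q != 0 -> p != q ->
  0 <= gamma (enorm3 (p - q)) (r * enorm3 p) / enorm3 p * dot3 p (p - q)
     + gamma (enorm3 (q - p)) (r * enorm3 q) / enorm3 q * dot3 q (q - p).
Proof.
wlog hab : p q / enorm3 q <= enorm3 p.
  move=> W hp hq hpq; case: (leP (enorm3 q) (enorm3 p)) => h; first exact: W.
  rewrite addrC; apply: W => //; [exact: ltW | by rewrite eq_sym].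
move=> hp hq hpq.
have ea : dot3 p p = enorm3 p ^+ 2 by rewrite sqr_sqrtr // dot_ge0.
have eb : dot3 q q = enorm3 q ^+ 2 by rewrite sqr_sqrtr // dot_ge0.
have ha : 0 < enorm3 p by rewrite sqrtr_gt0 dot_gt0.
have hb : 0 < enorm3 q by rewrite sqrtr_gt0 dot_gt0.
have hd : 0 < enorm3 (p - q) by rewrite sqrtr_gt0 dot_gt0 // subr_eq0.
have edq : enorm3 (q - p) = enorm3 (p - q) by rewrite /enorm3; congr Num.sqrt; apply: eq_bigr => i _; rewrite !mxE; ring.
have hc := cs p q.
rewrite edq !dot_sub (dotC q p) ea eb.
move: ha hb hd hab hc.
set a := enorm3 p; set b := enorm3 q; set d := enorm3 (p - q); set c := dot3 p q.
move=> ha hb hd hab hc.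
have g1 : gamma d (r * b) <= gamma d (r * a) by apply: gamma_mono => //; [exact: mulr_gt0 | rewrite ler_pM2l].
have g0 : 0 <= gamma d (r * b) by apply: gamma_ge0 => //; exact: mulr_gt0.
set gj := gamma d (r * a); set gk := gamma d (r * b).
set A := (a ^+ 2 - c) / a; set B := (b ^+ 2 - c) / b.
have -> : gj / a * (a ^+ 2 - c) + gk / b * (b ^+ 2 - c) = gj * A + gk * B.
  rewrite /A /B; field; apply/andP; split; rewrite gt_eqF //.
have hA : 0 <= A.
  rewrite /A divr_ge0 //; last exact: ltW.
  have h1 : 0 <= a * (a - b) by apply: mulr_ge0; lra.
  have : a ^+ 2 = a * (a - b) + a * b by ring.
  lra.
have hAB : 0 <= A + B.
  have -> : A + B = (a + b) * (a * b - c) / (a * b).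
    rewrite /A /B; field; apply/andP; split; rewrite gt_eqF //.
  by rewrite divr_ge0 ?mulr_ge0 //; lra.
have e : gj * A + gk * B = (gj - gk) * A + gk * (A + B) by ring.
by rewrite e addr_ge0 // mulr_ge0 // subr_ge0.
Qed.
End S.

Theorem lemma5p4 (R : realType) (gamma : R -> R -> R)
  (gamma_ge0 : forall u v, 0 < u -> 0 < v -> 0 <= gamma u v)
  (gamma_mono : forall u v1 v2, 0 < u -> 0 < v1 -> v1 <= v2 -> gamma u v1 <= gamma u v2)
  (N : nat) (hN : (2 <= N)%N) (x : 'I_N -> 'rV[R]_3)
  (hx0 : forall j, x j != 0)
  (hxinj : injective x)
  (r : R) (hr : 0 < r) :
  0 <= \sum_(j < N) \sum_(k < N | k != j)
         gamma (enorm3 (x j - x k)) (r * enorm3 (x j)) / enorm3 (x j)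
         * dot3 (x j) (x j - x k).
Proof.
pose f := fun j k => gamma (enorm3 (x j - x k)) (r * enorm3 (x j)) / enorm3 (x j)
         * dot3 (x j) (x j - x k).
change (0 <= \sum_(j < N) \sum_(k < N | k != j) f j k).
have fjj : forall j, f j j = 0.
  move=> j; rewrite /f subrr /dot3 big1 ?mulr0 // => i _; by rewrite mxE mulr0.
have E : \sum_(j < N) \sum_(k < N | k != j) f j k = \sum_(j < N) \sum_(k < N) f j k.
  by apply: eq_bigr => j _; rewrite [RHS](bigD1 j) //= fjj add0r.
rewrite E.
have E2 : \sum_(j < N) \sum_(k < N) (f j k + f k j) =
   \sum_(j < N) \sum_(k < N) f j k + \sum_(j < N) \sum_(k < N) f j k.
  rewrite (eq_bigr (fun j => \sum_(k < N) f j k + \sum_(k < N) f k j)); last first.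
    by move=> j _; rewrite big_split.
  by rewrite big_split /= [X in _ + X = _]exchange_big.
have H : 0 <= \sum_(j < N) \sum_(k < N) (f j k + f k j).
  apply: sumr_ge0 => j _; apply: sumr_ge0 => k _.
  have [<-|hjk] := eqVneq j k; first by rewrite fjj addr0 lexx.
  apply: pair_ge0 => //.
  by apply: contra hjk => /eqP /hxinj ->.
move: H; rewrite E2; set S := \sum_(j < N) _; lra.
Qed.
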